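(* Let $K$ be a division ring and $m,n\ge2$ integers. The following are equivalent: (i) for every torsion-free group $G$ there are no $a,b\in K[G]$ with $\operatorname{rank}(a)=m$, $\operatorname{rank}(b)=n$ and $ab=1$; (ii) for every $\Gamma=\Gamma_\pi\in\mathrm{ULIE}_K(m,n)$ with its canonical generators $1=a_0,a_1,\dots,a_{m-1}$ and $1=b_0,b_1,\dots,b_{n-1}$, letting $\phi:\Gamma\to\Gamma/N_{\mathrm{tor}}(\Gamma)$ be the quotient map, we have $\phi(a_i)=\phi(a_{i'})$ for some $0\le i<i'\le m-1$ or $\phi(b_j)=\phi(b_{j'})$ for some $0\le j<j'\le n-1$.
   Context: $K$ is a nonzero division ring, $K[G]$ the group ring, and the rank of an element is the number of group elements with nonzero coefficient. For $m,n\ge2$ and a partition $\pi$ of $S_{m,n}=\{0,\dots,m-1\}\times\{0,\dots,n-1\}$, $(i,j)\sim_\pi(i',j')$ means same block; $\Gamma_\pi$ is the group with (canonical) generators $a_0,\dots,a_{m-1},b_0,\dots,b_{n-1}$ and relations $a_0=b_0=1$, $a_ib_j=a_{i'}b_{j'}$ whenever $(i,j)\sim_\pi(i',j')$. $\pi$ is nondegenerate if in $\Gamma_\pi$ the $a_i$ are pairwise distinct and the $b_j$ are pairwise distinct. Given nonzero $r_0,\dots,r_{m-1},s_0,\dots,s_{n-1}\in K$, $\pi$ is realizable with them if for each block $E$, $\sum_{(i,j)\in E}r_is_j$ equals $1$ if $(0,0)\in E$, else $0$; ordering partitions by refinement, $\pi$ is minimally realizable over $K$ if for some choice of nonzero elements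 of $K$ it is minimal among partitions realizable with them. $\mathrm{ULIE}_K(m,n)$ is the set of $\Gamma_\pi$ with $\pi$ a nondegenerate partition of $S_{m,n}$ minimally realizable over $K$. For a group $\Gamma$, $N^{(1)}_{\mathrm{tor}}(\Gamma)$ is the smallest normal subgroup containing all elements of finite order; set $N_{\mathrm{tor},1}=N^{(1)}_{\mathrm{tor}}(\Gamma)$ and, with $\phi_k:\Gamma\to\Gamma/N_{\mathrm{tor},k}$ the quotient map, $N_{\mathrm{tor},k+1}=\phi_k^{-1}(N^{(1)}_{\mathrm{tor}}(\Gamma/N_{\mathrm{tor},k}))$; $N_{\mathrm{tor}}(\Gamma)=\bigcup_{k\ge1}N_{\mathrm{tor},k}$. *)

(* Defs.v *)
From HB Require Import structures.
From mathcomp Require Import all_boot all_order all_algebra.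
From Stdlib Require List.
Set Implicit Arguments. Unset Strict Implicit. Unset Printing Implicit Defensive.
Import GRing.Theory.
Local Open Scope ring_scope.

Record group := Group {
  gcar :> Type;
  gmul : gcar -> gcar -> gcar;
  ginv : gcar -> gcar;
  gone : gcar;
  gmulA : forall x y z, gmul x (gmul y z) = gmul (gmul x y) z;
  gmul1 : forall x, gmul gone x = x;
  gmulV : forall x, gmul (ginv x) x = gone }.

Fixpoint gpow (G : group) (g : G) (k : nat) : G :=
  match k with 0 => gone G | k'.+1 => gmul g (gpow g k') end.

Definition torsion_free (G : group) : Prop :=
  forall (g : G) (k : nat), (0 < k)%N -> gpow g k = gone G -> g = gone G.

(* Elements of the group ring K[G] are finitely supported functions G -> K.
   [support_list a s] : s lists (without repetition) exactly the group
   elements with nonzero coefficient in a. *)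
Definition support_list (K : nzRingType) (G : group) (a : G -> K) (s : seq G) :=
  List.NoDup s /\ forall g, a g != 0 <-> List.In g s.

Definition rank_eq (K : nzRingType) (G : group) (a : G -> K) (r : nat) :=
  exists s, support_list a s /\ size s = r.

Definition gr_prod_is_one (K : nzRingType) (G : group) (a b : G -> K) :=
  forall s, support_list a s -> forall x : G,
    let c := \sum_(h <- s) (a h * b (gmul (ginv h) x)) in
    (x = gone G -> c = 1) /\ (x <> gone G -> c = 0).

(* Generators a_i (i < m) and b_j (j < n); a letter is (inverted?, gen). *)
Section Words.
Variables m n : nat.
Definition letter := (bool * ('I_m + 'I_n))%type.
Definition word := seq letter.
Definition linv (x : letter) : letter := (~~ x.1, x.2).
Definition winv (w : word) : word := rev (map linv w).
Definition wpow (w : word) (k : nat) : word := flatten (nseq k w).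
Definition gA (i : 'I_m) : word := [:: (false, inl i)].
Definition gB (j : 'I_n) : word := [:: (false, inr j)].

(* [ncl S w] : the word w represents an element of the normal closure of
   (the elements represented by) S in the free group on the generators.
   The closure under insertion/deletion of x x^-1 makes this exactly the
   preimage in the word monoid of that normal subgroup. *)
Inductive ncl (S : word -> Prop) : word -> Prop :=
  | ncl_nil : ncl S [::]
  | ncl_gen w : S w -> ncl S w
  | ncl_inv w : ncl S w -> ncl S (winv w)
  | ncl_mul w v : ncl S w -> ncl S v -> ncl S (w ++ v)
  | ncl_conj u w : ncl S w -> ncl S (u ++ w ++ winv u)
  | ncl_ins u v x : ncl S (u ++ v) -> ncl S (u ++ [:: x; linv x] ++ v)
  | ncl_del u v x : ncl S (u ++ [:: x; linv x] ++ v) -> ncl S (u ++ v).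
End Words.

Definition cell (m n : nat) := ('I_m * 'I_n)%type.

Definition same_block (m n : nat) (P : {set {set cell m n}}) (p q : cell m n) :=
  exists2 E, E \in P & (p \in E) && (q \in E).

Definition relators (m n : nat) (P : {set {set cell m n}}) (w : word m n) : Prop :=
  (exists i : 'I_m, nat_of_ord i = 0%N /\ w = gA n i)
  \/ (exists j : 'I_n, nat_of_ord j = 0%N /\ w = gB m j)
  \/ (exists i j i' j', same_block P (i, j) (i', j') /\
        w = gA n i ++ gB m j ++ winv (gB m j') ++ winv (gA n i')).

Definition is_one_Gamma (m n : nat) (P : {set {set cell m n}}) (w : word m n) :=
  ncl (relators P) w.

(* Preimage in the free group of N_{tor,k}(Gamma_pi); level 0 is the
   trivial subgroup of Gamma_pi (i.e. the kernel of F -> Gamma_pi).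
   N_{tor,k+1} = preimage of the normal closure of the torsion elements of
   Gamma / N_{tor,k}. *)
Fixpoint Ntor_level (m n : nat) (P : {set {set cell m n}}) (k : nat) : word m n -> Prop :=
  match k with
  | 0 => is_one_Gamma P
  | k'.+1 => ncl (fun w => exists2 p, (0 < p)%N & Ntor_level P k' (wpow w p))
  end.

Definition Ntor (m n : nat) (P : {set {set cell m n}}) (w : word m n) : Prop :=
  exists k, Ntor_level P k w.

Definition nondegenerate (m n : nat) (P : {set {set cell m n}}) : Prop :=
  (forall i i' : 'I_m, i != i' -> ~ is_one_Gamma P (gA n i ++ winv (gA n i')))
  /\ (forall j j' : 'I_n, j != j' -> ~ is_one_Gamma P (gB m j ++ winv (gB m j'))).

Definition realizable (K : nzRingType) (m n : nat) (P : {set {set cell m n}})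
    (r : 'I_m -> K) (s : 'I_n -> K) : Prop :=
  forall E, E \in P ->
    let c := \sum_(p in E) (r p.1 * s p.2) in
    ((exists2 p, p \in E & (nat_of_ord p.1 == 0%N) && (nat_of_ord p.2 == 0%N)) -> c = 1)
    /\ (~ (exists2 p, p \in E & (nat_of_ord p.1 == 0%N) && (nat_of_ord p.2 == 0%N)) -> c = 0).

Definition refines (T : finType) (P Q : {set {set T}}) : Prop :=
  forall E, E \in P -> exists2 F, F \in Q & E \subset F.

Definition minimally_realizable (K : nzRingType) (m n : nat)
    (P : {set {set cell m n}}) : Prop :=
  exists (r : 'I_m -> K) (s : 'I_n -> K),
    (forall i, r i != 0) /\ (forall j, s j != 0) /\ realizable P r s /\
    (forall Q : {set {set cell m n}}, partition Q [set: cell m n] ->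
        realizable Q r s -> refines Q P -> Q = P).

Definition in_ULIE (K : nzRingType) (m n : nat) (P : {set {set cell m n}}) : Prop :=
  partition P [set: cell m n] /\ nondegenerate P /\ minimally_realizable K P.

(* Main.v *)
From Stdlib Require List.
From Stdlib Require Import Permutation ClassicalEpsilon Classical FunctionalExtensionality PropExtensionality.
Require Import Defs.
From HB Require Import structures.
From mathcomp Require Import all_boot all_order all_algebra.
Set Implicit Arguments. Unset Strict Implicit. Unset Printing Implicit Defensive.
Import GRing.Theory.
Local Open Scope ring_scope.
Section GroupFacts.
Variable G : group.
Local Notation "x * y" := (gmul x y).
Local Notation "1" := (gone G).

Lemma gmulVr (x : G) : x * ginv x = 1.
Proof.
have e : x * ginv x = ginv (ginv x) * ginv x * (x * ginv x).
  by rewrite gmulV gmul1.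
by rewrite e -gmulA (gmulA (ginv x) x) gmulV gmul1 gmulV.
Qed.

Lemma gmulr1 (x : G) : x * 1 = x.
Proof. by rewrite -(gmulV x) gmulA gmulVr gmul1. Qed.

Lemma ginvK (x : G) : ginv (ginv x) = x.
Proof. by rewrite -[LHS]gmulr1 -(gmulV x) gmulA gmulV gmul1. Qed.

Lemma ginv_uniq (x y : G) : x * y = 1 -> ginv x = y.
Proof. by move=> e; rewrite -(gmulr1 (ginv x)) -e gmulA gmulV gmul1. Qed.

Lemma ginv_mul (x y : G) : ginv (x * y) = ginv y * ginv x.
Proof.
apply: ginv_uniq.
by rewrite -gmulA (gmulA y) gmulVr gmul1 gmulVr.
Qed.

Lemma gmulKl (x y : G) : ginv x * (x * y) = y.
Proof. by rewrite gmulA gmulV gmul1. Qed.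

Lemma gmulKr (x y : G) : x * (ginv x * y) = y.
Proof. by rewrite gmulA gmulVr gmul1. Qed.

Lemma ginv1 : ginv 1 = 1.
Proof. by rewrite -[LHS]gmul1 gmulVr. Qed.

Lemma gmul_eq1 (x y : G) : x * ginv y = 1 -> x = y.
Proof. by move=> e; rewrite -(gmulr1 x) -(gmulV y) gmulA e gmul1. Qed.

Lemma ginv_inj (x y : G) : ginv x = ginv y -> x = y.
Proof. by move=> e; rewrite -(ginvK x) e ginvK. Qed.

Lemma gsolve (x y z : G) : (y = ginv x * z) <-> (x * y = z).
Proof. by split=> [->|<-]; rewrite ?gmulKr ?gmulKl. Qed.

End GroupFacts.

Definition eqG {T : Type} (x y : T) : bool :=
  if excluded_middle_informative (x = y) then true else false.

Lemma eqGP {T : Type} (x y : T) : reflect (x = y) (eqG x y).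
Proof. by rewrite /eqG; case: excluded_middle_informative => h; constructor. Qed.

Section Eval.
Variables (m n : nat) (G : group) (fa : 'I_m -> G) (fb : 'I_n -> G).

Definition leval (x : letter m n) : G :=
  let y := match x.2 with inl i => fa i | inr j => fb j end in
  if x.1 then ginv y else y.

Definition weval (w : word m n) : G := foldr (fun x acc => gmul (leval x) acc) (gone G) w.

Lemma weval_cat u v : weval (u ++ v) = gmul (weval u) (weval v).
Proof. by elim: u => [|x u IH] /=; rewrite ?gmul1 // IH gmulA. Qed.

Lemma leval_linv x : leval (linv x) = ginv (leval x).
Proof. by case: x => [[] g] //=; rewrite /leval /= ginvK. Qed.

Lemma weval_winv w : weval (winv w) = ginv (weval w).
Proof.
elim: w => [|x w IH]; first by rewrite /= ginv1.
rewrite /winv /= rev_cons -cats1 weval_cat -/(winv w) IH /= gmulr1 leval_linv.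
by rewrite ginv_mul.
Qed.

Lemma weval_wpow w k : weval (wpow w k) = gpow (weval w) k.
Proof. by elim: k => [|k IH] //=; rewrite /wpow /= weval_cat -/(wpow w k) IH. Qed.

Lemma weval_ins u v x : weval (u ++ [:: x; linv x] ++ v) = weval (u ++ v).
Proof.
rewrite !weval_cat; congr gmul; by rewrite /= leval_linv gmulKr gmul1.
Qed.

Lemma ncl_sound (S : word m n -> Prop) :
  (forall w, S w -> weval w = gone G) -> forall w, ncl S w -> weval w = gone G.
Proof.
move=> HS w; elim => {w} [|w Sw|w _ IH|w v _ IH1 _ IH2|u w _ IH|u v x _ IH|u v x _ IH].
- by [].
- exact: HS.
- by rewrite weval_winv IH ginv1.
- by rewrite weval_cat IH1 IH2 gmul1.
- by rewrite !weval_cat IH gmul1 weval_winv gmulVr.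
- by rewrite weval_ins.
- by rewrite weval_ins in IH.
Qed.

End Eval.
Lemma In_mem (T : eqType) (x : T) (s : seq T) : List.In x s <-> x \in s.
Proof.
elim: s => [|y s IH] //=; rewrite in_cons; split.
- by case=> [->|/IH ->]; rewrite ?eqxx ?orbT.
- by case/orP=> [/eqP ->|/IH]; [left|right].
Qed.

Lemma NoDup_uniq (T : eqType) (s : seq T) : uniq s -> List.NoDup s.
Proof.
elim: s => [|y s IH] /=; first by constructor.
by case/andP=> ys us; constructor; [move/In_mem; rewrite (negbTE ys)|exact: IH].
Qed.

Lemma List_map_seq (A B : Type) (f : A -> B) (l : seq A) : List.map f l = map f l.
Proof. by elim: l => //= x l ->. Qed.

Lemma In_nth_idx (T : Type) (d : T) (s : seq T) x :
  List.In x s -> exists k, (k < size s)%N /\ nth d s k = x.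
Proof.
elim: s => [|y s IH] //= [->|/IH [k [hk e]]]; first by exists 0%N.
by exists k.+1.
Qed.

Lemma In_nth (T : Type) (d : T) (s : seq T) k : (k < size s)%N -> List.In (nth d s k) s.
Proof.
elim: s k => [|y s IH] [|k] //= hk; first by left.
by right; apply: IH.
Qed.

Lemma NoDup_nth_inj (T : Type) (d : T) (s : seq T) k k' :
  List.NoDup s -> (k < size s)%N -> (k' < size s)%N -> nth d s k = nth d s k' -> k = k'.
Proof.
elim: s k k' => [|y s IH] k k' //= nd; inversion nd; subst.
case: k k' => [|k] [|k'] //= hk hk' e.
- by exfalso; apply: H1; rewrite e; apply: In_nth.
- by exfalso; apply: H1; rewrite -e; apply: In_nth.
- by rewrite (IH k k').
Qed.

Lemma sum_perm (K : nzRingType) (T : Type) (F : T -> K) (s t : seq T) :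
  Permutation s t -> \sum_(h <- s) F h = \sum_(h <- t) F h.
Proof.
elim => [|x l l' _ IH|x y l|l l' l'' _ IH1 _ IH2] //.
- by rewrite !big_cons IH.
- by rewrite !big_cons addrCA.
- by rewrite IH1 IH2.
Qed.

Lemma sum_zero_seq (K : nzRingType) (T : Type) (F : T -> K) (s : seq T) :
  (forall h, List.In h s -> F h = 0) -> \sum_(h <- s) F h = 0.
Proof.
elim: s => [|x s IH] H; first by rewrite big_nil.
by rewrite big_cons H /= ?IH ?add0r //; [move=> h hs; apply: H; right|left].
Qed.

Lemma sum_nonzero_seq (K : nzRingType) (T : Type) (F : T -> K) (s : seq T) :
  \sum_(h <- s) F h != 0 -> exists h, List.In h s /\ F h != 0.
Proof.
move=> H; apply: NNPP => H'; move/eqP: H; apply; apply: sum_zero_seq => h hs.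
by apply/eqP; apply: contraT => hn; case: H'; exists h.
Qed.

Section Coef.
Variables (K : nzRingType) (G : group) (m n : nat) (a b : G -> K).
Variables (ga : 'I_m -> G) (gb : 'I_n -> G).
Hypotheses (ga_inj : injective ga) (gb_inj : injective gb).
Hypotheses (ga_nz : forall i, a (ga i) != 0) (gb_nz : forall j, b (gb j) != 0).
Hypotheses (a_supp : forall x, a x != 0 -> exists i, x = ga i).
Hypotheses (b_supp : forall y, b y != 0 -> exists j, y = gb j).

Lemma b_expand z : b z = \sum_j (if eqG (gb j) z then b (gb j) else 0).
Proof.
case: (boolP (b z == 0)) => [/eqP bz|/b_supp [j ->]].
- by rewrite bz big1 // => j _; case: eqGP => // ->; rewrite bz.
- rewrite (bigD1 j) //=; case: eqGP => // _; rewrite big1 ?addr0 // => k kj.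
  by case: eqGP => // /gb_inj e; rewrite e eqxx in kj.
Qed.

Lemma sum_supp (s : seq G) (F : G -> K) : support_list a s ->
  \sum_(h <- s) F h = \sum_i F (ga i).
Proof.
case=> nd sp.
have P : Permutation s (List.map ga (enum 'I_m)).
  apply: NoDup_Permutation => //.
    apply: FinFun.Injective_map_NoDup; first by move=> x y; apply: ga_inj.
    by apply: NoDup_uniq; apply: enum_uniq.
  move=> x; rewrite -sp; split.
    by case/a_supp=> i ->; apply: List.in_map; apply/In_mem; rewrite mem_enum.
  by case/List.in_map_iff=> i [<- _]; apply: ga_nz.
by rewrite (sum_perm _ P) List_map_seq big_map big_enum.
Qed.

Lemma coef (s : seq G) : support_list a s -> forall y,
  \sum_(h <- s) a h * b (gmul (ginv h) y) =
  \sum_(q : 'I_m * 'I_n | eqG (gmul (ga q.1) (gb q.2)) y) a (ga q.1) * b (gb q.2).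
Proof.
move=> sl y; rewrite (sum_supp _ sl) [RHS]big_mkcond /=.
rewrite -[RHS](pair_bigA _ (fun i j => if eqG (gmul (ga i) (gb j)) y
   then a (ga i) * b (gb j) else 0)) /=; apply: eq_bigr => i _.
rewrite b_expand mulr_sumr; apply: eq_bigr => j _.
case: eqGP => e1; case: eqGP => e2 //.
- by exfalso; apply: e2; apply/gsolve.
- by exfalso; apply: e1; apply/gsolve.
- by rewrite mulr0.
Qed.

End Coef.
Section Parts.
Variable T : finType.
Implicit Types Q : {set {set T}}.

Definition relset Q := [set pq : T * T | pq.2 \in pblock Q pq.1].

Lemma part_cover Q : partition Q [set: T] -> forall x, x \in cover Q.
Proof. by case/and3P=> /eqP -> _ _ x; rewrite inE. Qed.

Lemma part_triv Q : partition Q [set: T] -> trivIset Q.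
Proof. by case/and3P. Qed.

Lemma part_pblock Q : partition Q [set: T] -> Q = [set pblock Q x | x : T].
Proof.
move=> pQ; apply/setP => E; apply/idP/imsetP.
- move=> EQ; case/and3P: pQ => _ tQ n0.
  have : E != set0 by apply: contraNneq n0 => <-.
  case/set0Pn => x xE; exists x => //; by rewrite (def_pblock tQ EQ xE).
- by case=> x _ ->; apply: pblock_mem; apply: part_cover.
Qed.

Lemma refine_pblock Q' Q : partition Q' [set: T] -> partition Q [set: T] ->
  refines Q' Q -> forall x, pblock Q' x \subset pblock Q x.
Proof.
move=> pQ' pQ rQ x.
have /rQ [F FQ sub] := pblock_mem (part_cover pQ' x).
have xF : x \in F by apply: (subsetP sub); rewrite mem_pblock part_cover.
by rewrite (def_pblock (part_triv pQ) FQ xF).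
Qed.

Lemma refine_lt Q' Q : partition Q' [set: T] -> partition Q [set: T] ->
  refines Q' Q -> Q' <> Q -> (#|relset Q'| < #|relset Q|)%N.
Proof.
move=> pQ' pQ rQ ne.
have sub : relset Q' \subset relset Q.
  apply/subsetP => -[x y]; rewrite !inE /= => h.
  exact: (subsetP (refine_pblock pQ' pQ rQ x)).
rewrite ltnNge; apply/negP => hle; apply: ne.
have /eqP eqr : relset Q' == relset Q by rewrite eqEcard sub hle.
have eb : forall x, pblock Q' x = pblock Q x.
  move=> x; apply/setP => y.
  have := congr1 (fun S : {set T * T} => (x, y) \in S) eqr; by rewrite /= !inE.
by rewrite (part_pblock pQ') (part_pblock pQ); apply: eq_imset.
Qed.

Lemma refines_refl Q : refines Q Q.
Proof. by move=> E EQ; exists E. Qed.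

Lemma refines_trans Q1 Q2 Q3 : refines Q1 Q2 -> refines Q2 Q3 -> refines Q1 Q3.
Proof.
move=> r12 r23 E /r12 [F /r23 [F' F'Q sF'] sF].
by exists F' => //; apply: subset_trans sF sF'.
Qed.

Lemma exists_minimal (R : {set {set T}} -> Prop) P :
  partition P [set: T] -> R P ->
  exists Q, [/\ partition Q [set: T], R Q, refines Q P &
    forall Q', partition Q' [set: T] -> R Q' -> refines Q' Q -> Q' = Q].
Proof.
move: {2}#|relset P| (leqnn #|relset P|) => N.
elim: N P => [|N IH] P hN pP RP.
- exists P; split => //; first exact: refines_refl.
  move=> Q' pQ' RQ' rQ'; apply: NNPP => ne.
  by have := refine_lt pQ' pP rQ' ne; rewrite ltnNge (leq_trans hN).
- case: (classic (forall Q', partition Q' [set: T] -> R Q' -> refines Q' P -> Q' = P)).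
    by move=> min; exists P; split => //; apply: refines_refl.
  move=> hnot; have [Q' h] := not_all_ex_not _ _ hnot.
  have [pQ' h1] := imply_to_and _ _ h; have [RQ' h2] := imply_to_and _ _ h1.
  have [rQ' ne] := imply_to_and _ _ h2.
  have lt := refine_lt pQ' pP rQ' ne.
  have hle : (#|relset Q'| <= N)%N := leq_trans lt hN.
  have [Q [pQ RQ rQ min]] := IH Q' hle pQ' RQ'.
  exists Q; split => //; exact: refines_trans rQ rQ'.
Qed.

End Parts.
Section Sound.
Variables (m n : nat) (P : {set {set cell m n}}) (G : group).
Variables (fa : 'I_m -> G) (fb : 'I_n -> G).

Lemma weval_gA i : weval fa fb (gA n i) = fa i.
Proof. by rewrite /= gmulr1. Qed.

Lemma weval_gB j : weval fa fb (gB m j) = fb j.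
Proof. by rewrite /= gmulr1. Qed.

Lemma weval_AA i i' : weval fa fb (gA n i ++ winv (gA n i')) = gmul (fa i) (ginv (fa i')).
Proof. by rewrite weval_cat weval_winv !weval_gA. Qed.

Lemma weval_BB j j' : weval fa fb (gB m j ++ winv (gB m j')) = gmul (fb j) (ginv (fb j')).
Proof. by rewrite weval_cat weval_winv !weval_gB. Qed.

Lemma weval_rel i j i' j' :
  weval fa fb (gA n i ++ gB m j ++ winv (gB m j') ++ winv (gA n i')) =
  gmul (gmul (fa i) (fb j)) (ginv (gmul (fa i') (fb j'))).
Proof.
rewrite !weval_cat !weval_winv weval_gA weval_gB weval_gA weval_gB ginv_mul.
by rewrite !gmulA.
Qed.

Lemma Ntor_sound : torsion_free G ->
  (forall w, relators P w -> weval fa fb w = gone G) ->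
  forall w, Ntor P w -> weval fa fb w = gone G.
Proof.
move=> tf hrel w [k]; elim: k w => [|k IH] w /=.
- exact: ncl_sound.
- apply: ncl_sound => v [p hp hv].
  by apply: (tf _ p hp); rewrite -weval_wpow; apply: IH.
Qed.

End Sound.

Definition swap (T : eqType) (x y : T) (i : T) : T :=
  if i == x then y else if i == y then x else i.

Lemma swapK (T : eqType) (x y : T) : cancel (swap x y) (swap x y).
Proof.
move=> i; rewrite /swap.
case: (eqVneq i x) => [->|nix]; first by rewrite eqxx; case: eqVneq.
case: (eqVneq i y) => [->|niy]; first by rewrite eqxx.
by rewrite (negbTE nix) (negbTE niy).
Qed.

Lemma swapR (T : eqType) (x y : T) : swap x y y = x.
Proof. by rewrite /swap eqxx; case: eqVneq. Qed.

Section IItoI.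
Variables (K : nzRingType) (m n : nat) (hm : (0 < m)%N) (hn : (0 < n)%N).
Variable H : forall P : {set {set cell m n}}, in_ULIE K P ->
     (exists i i' : 'I_m, (i < i')%N /\ Ntor P (gA n i ++ winv (gA n i')))
     \/ (exists j j' : 'I_n, (j < j')%N /\ Ntor P (gB m j ++ winv (gB m j'))).
Variables (G : group) (tf : torsion_free G) (a b : G -> K).
Variables (sa sb : seq G) (sla : support_list a sa) (slb : support_list b sb).
Hypotheses (sza : size sa = m) (szb : size sb = n) (ab1 : gr_prod_is_one a b).

Lemma find_one : exists (i0 : 'I_m) (j0 : 'I_n),
  gmul (nth (gone G) sa i0) (nth (gone G) sb j0) = gone G.
Proof.
have hs := (ab1 sla (gone G)).1 erefl; simpl in hs.
have : \sum_(h <- sa) a h * b (gmul (ginv h) (gone G)) != 0 by rewrite hs oner_neq0.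
case/sum_nonzero_seq => h [hin hnz].
have hb : b (gmul (ginv h) (gone G)) != 0 by apply: contraNneq hnz => ->; rewrite mulr0.
have ha : a h != 0 by apply: contraNneq hnz => ->; rewrite mul0r.
have [k [hk ek]] := In_nth_idx (gone G) ((sla.2 h).1 ha).
have [l [hl el]] := In_nth_idx (gone G) ((slb.2 _).1 hb).
rewrite sza in hk; rewrite szb in hl.
exists (Ordinal hk), (Ordinal hl); rewrite /= ek el; exact: gmulKr.
Qed.

Section Main.
Variables (i0 : 'I_m) (j0 : 'I_n).
Hypothesis e0 : gmul (nth (gone G) sa i0) (nth (gone G) sb j0) = gone G.

Let d := gone G.
Let za : 'I_m := Ordinal hm.
Let zb : 'I_n := Ordinal hn.
Let sig : 'I_m -> 'I_m := swap i0 za.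
Let tau : 'I_n -> 'I_n := swap j0 zb.
Let ga (i : 'I_m) : G := nth d sa (sig i).
Let gb (j : 'I_n) : G := nth d sb (tau j).

Let ga_inj : injective ga.
Proof.
move=> i i' e; apply: (can_inj (swapK i0 za)); apply: val_inj.
by apply: (@NoDup_nth_inj _ d sa _ _ sla.1); rewrite ?sza ?ltn_ord.
Qed.
Let gb_inj : injective gb.
Proof.
move=> i i' e; apply: (can_inj (swapK j0 zb)); apply: val_inj.
by apply: (@NoDup_nth_inj _ d sb _ _ slb.1); rewrite ?szb ?ltn_ord.
Qed.
Let ga_nz i : a (ga i) != 0.
Proof. by apply/(sla.2 _).2; apply: In_nth; rewrite sza. Qed.
Let gb_nz j : b (gb j) != 0.
Proof. by apply/(slb.2 _).2; apply: In_nth; rewrite szb. Qed.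
Let a_supp x : a x != 0 -> exists i, x = ga i.
Proof.
move=> hx; have [k [hk ek]] := In_nth_idx d ((sla.2 x).1 hx); rewrite sza in hk.
by exists (sig (Ordinal hk)); rewrite /ga /sig swapK.
Qed.
Let b_supp x : b x != 0 -> exists j, x = gb j.
Proof.
move=> hx; have [k [hk ek]] := In_nth_idx d ((slb.2 x).1 hx); rewrite szb in hk.
by exists (tau (Ordinal hk)); rewrite /gb /tau swapK.
Qed.

Let prodc (q : cell m n) : G := gmul (ga q.1) (gb q.2).
Let zz : cell m n := (za, zb).
Let prod_zz : prodc zz = gone G.
Proof. by rewrite /prodc /= /ga /gb /sig /tau !swapR. Qed.

Let coefP y : \sum_(h <- sa) a h * b (gmul (ginv h) y) =
  \sum_(q : cell m n | eqG (prodc q) y) a (ga q.1) * b (gb q.2).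
Proof. exact: (coef ga_inj gb_inj ga_nz a_supp b_supp sla y). Qed.

Let r (i : 'I_m) : K := a (ga i).
Let s (j : 'I_n) : K := b (gb j).
Let Rel : rel (cell m n) := fun p q => eqG (prodc p) (prodc q).

Let Rel_equiv : {in [set: cell m n] & &, equivalence_rel Rel}.
Proof.
move=> x y w _ _ _; split; rewrite /Rel; first by apply/eqGP.
by move/eqGP => e; apply/eqGP/eqGP => e'; congruence.
Qed.

Let P0 := equivalence_partition Rel [set: cell m n].
Let pP0 : partition P0 [set: cell m n] := equivalence_partitionP Rel_equiv.

Let cell00 (p : cell m n) : (nat_of_ord p.1 == 0%N) && (nat_of_ord p.2 == 0%N) -> p = zz.
Proof.
case: p => [[i hi] [j hj]] /= /andP [/eqP ei /eqP ej]; subst.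
by congr pair; apply: val_inj.
Qed.

Let realP0 : realizable P0 r s.
Proof.
move=> E /imsetP [x _ ->]; cbv zeta.
have hsum : \sum_(p in [set y in [set: cell m n] | Rel x y]) r p.1 * s p.2 =
    \sum_(h <- sa) a h * b (gmul (ginv h) (prodc x)).
  rewrite coefP; apply: eq_bigl => p; rewrite !inE /= /Rel.
  by apply/eqGP/eqGP => e; rewrite e.
rewrite hsum; split.
- case=> p; rewrite !inE /= => /eqGP hp /cell00 pz.
  by apply: (ab1 sla _).1; rewrite hp pz prod_zz.
- move=> hne; apply: (ab1 sla _).2 => hx; apply: hne; exists zz.
    by rewrite !inE /=; apply/eqGP; rewrite hx prod_zz.
  by [].
Qed.

Lemma IItoI_main : False.
Proof.
have [Q [pQ RQ rQ minQ]] := @exists_minimal _ (fun Q => realizable Q r s) P0 pP0 realP0.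
have same_prod : forall p q, same_block Q p q -> prodc p = prodc q.
  move=> p q [E EQ /andP [pE qE]]; have [F FP sEF] := rQ E EQ.
  move: FP => /imsetP [x _ eF]; rewrite eF in sEF.
  have := subsetP sEF p pE; have := subsetP sEF q qE; rewrite !inE /= /Rel.
  by move=> /eqGP <- /eqGP <-.
pose fa i := gmul (ginv (ga za)) (ga i).
pose fb j := gmul (gb j) (ginv (gb zb)).
have fafb : forall i j, gmul (fa i) (fb j) =
    gmul (ginv (ga za)) (gmul (prodc (i, j)) (ginv (gb zb))).
  by move=> i j; rewrite /fa /fb /prodc /= !gmulA.
have hrel : forall w, relators Q w -> weval fa fb w = gone G.
  move=> w [[i [i0' ->]]|[[j [j0' ->]]|[i [j [i' [j' [sbl ->]]]]]]].
  - rewrite weval_gA; have -> : i = za by apply: val_inj.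
    by rewrite /fa gmulV.
  - rewrite weval_gB; have -> : j = zb by apply: val_inj.
    by rewrite /fb gmulVr.
  - by rewrite weval_rel !fafb (same_prod _ _ sbl) gmulVr.
have fa_inj : forall i i', fa i = fa i' -> i = i'.
  move=> i i' e; apply: ga_inj.
  by rewrite -(gmulKr (ga za) (ga i)) -(gmulKr (ga za) (ga i')) -/(fa i) e.
have fb_inj : forall j j', fb j = fb j' -> j = j'.
  move=> j j' e; apply: gb_inj.
  rewrite -(gmulr1 (gb j)) -(gmulr1 (gb j')) -(gmulV (gb zb)) !gmulA.
  by rewrite -/(fb j) e.
have NtorQ := Ntor_sound tf hrel.
have ULIE : in_ULIE K Q.
  split => //; split.
    split => [i i' ne h|j j' ne h].
      have := NtorQ _ (ex_intro _ 0%N h); rewrite weval_AA => /gmul_eq1 /fa_inj e.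
      by rewrite e eqxx in ne.
    have := NtorQ _ (ex_intro _ 0%N h); rewrite weval_BB => /gmul_eq1 /fb_inj e.
    by rewrite e eqxx in ne.
  by exists r, s; split => //; split.
case: (H ULIE) => [[i [i' [lt hN]]]|[j [j' [lt hN]]]].
- have := NtorQ _ hN; rewrite weval_AA => /gmul_eq1 /fa_inj e.
  by rewrite e ltnn in lt.
- have := NtorQ _ hN; rewrite weval_BB => /gmul_eq1 /fb_inj e.
  by rewrite e ltnn in lt.
Qed.

End Main.

Lemma IItoI_false : False.
Proof. by have [i0 [j0 e0]] := find_one; exact: (IItoI_main e0). Qed.

End IItoI.
Section WordLemmas.
Variables m n : nat.

Lemma linvK (x : letter m n) : linv (linv x) = x.
Proof. by case: x => b g; rewrite /linv /= negbK. Qed.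

Lemma winv_cat (u v : word m n) : winv (u ++ v) = winv v ++ winv u.
Proof. by rewrite /winv map_cat rev_cat. Qed.

Lemma winvK (w : word m n) : winv (winv w) = w.
Proof.
rewrite /winv map_rev revK -map_comp.
by rewrite (eq_map (g := id)) ?map_id // => x /=; rewrite linvK.
Qed.

Lemma winv_cons (x : letter m n) w : winv (x :: w) = winv w ++ [:: linv x].
Proof. by rewrite /winv /= rev_cons cats1. Qed.

Lemma ncl_cancel (S : word m n -> Prop) p u q :
  ncl S (p ++ u ++ winv u ++ q) <-> ncl S (p ++ q).
Proof.
elim: u p q => [|x u IH] p q /=; first by [].
rewrite winv_cons -!catA /=.
have -> : p ++ x :: u ++ winv u ++ linv x :: q =
          rcons p x ++ u ++ winv u ++ (linv x :: q) by rewrite -cats1 -catA.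
rewrite IH -cats1 -catA /=.
split => h.
- by apply: (ncl_del (x := x)).
- by apply: ncl_ins.
Qed.

End WordLemmas.

Section Quot.
Variables (m n : nat) (P : {set {set cell m n}}).
Local Notation N := (Ntor P).

Lemma level_ncl k : exists S, Ntor_level P k = ncl S.
Proof. by case: k => [|k]; eexists. Qed.

Lemma level_succ k w : Ntor_level P k w -> Ntor_level P k.+1 w.
Proof.
move=> h; apply: ncl_gen; exists 1%N => //.
by rewrite /wpow /= cats0.
Qed.

Lemma level_le k k' w : (k <= k')%N -> Ntor_level P k w -> Ntor_level P k' w.
Proof.
move=> /subnKC <-; elim: (k' - k)%N => [|d IH] h; first by rewrite addn0.
by rewrite addnS; apply: level_succ; apply: IH.
Qed.

Lemma Ntor_nil : N [::].
Proof. by exists 0%N; apply: ncl_nil. Qed.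

Lemma Ntor_inv w : N w -> N (winv w).
Proof. by case=> k h; exists k; have [S e] := level_ncl k; rewrite e in h *; apply: ncl_inv. Qed.

Lemma Ntor_mul u v : N u -> N v -> N (u ++ v).
Proof.
case=> k hu [k' hv]; exists (maxn k k').
have [S e] := level_ncl (maxn k k'); rewrite e; apply: ncl_mul; rewrite -e.
- by apply: (level_le (leq_maxl _ _)).
- by apply: (level_le (leq_maxr _ _)).
Qed.

Lemma Ntor_conj u w : N w -> N (u ++ w ++ winv u).
Proof. by case=> k h; exists k; have [S e] := level_ncl k; rewrite e in h *; apply: ncl_conj. Qed.

Lemma Ntor_cancel p u q : N (p ++ u ++ winv u ++ q) <-> N (p ++ q).
Proof.
split; case=> k h; exists k; have [S e] := level_ncl k; rewrite e in h *.
- exact: (ncl_cancel S p u q).1 h.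
- exact: (ncl_cancel S p u q).2 h.
Qed.

Lemma Ntor_gen w p : (0 < p)%N -> N (wpow w p) -> N w.
Proof. by move=> hp [k h]; exists k.+1; apply: ncl_gen; exists p. Qed.

Lemma Ntor_rel w : relators P w -> N w.
Proof. by move=> h; exists 0%N; apply: ncl_gen. Qed.

Definition eqv (u v : word m n) : Prop := N (u ++ winv v).

Lemma eqv_refl u : eqv u u.
Proof. by rewrite /eqv -[u ++ _]cat0s -[winv u]cats0; apply/Ntor_cancel; apply: Ntor_nil. Qed.

Lemma eqv_sym u v : eqv u v -> eqv v u.
Proof. by move/Ntor_inv; rewrite /eqv winv_cat winvK. Qed.

Lemma eqv_trans u v w : eqv u v -> eqv v w -> eqv u w.
Proof.
move=> h1 h2; have h := Ntor_mul h1 h2.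
have e : (u ++ winv v) ++ v ++ winv w = u ++ winv v ++ winv (winv v) ++ winv w
  by rewrite winvK -!catA.
by rewrite e in h; move/Ntor_cancel: h.
Qed.

Lemma eqv_cat u u' v v' : eqv u u' -> eqv v v' -> eqv (u ++ v) (u' ++ v').
Proof.
move=> hu hv; rewrite /eqv winv_cat.
have h := Ntor_mul (Ntor_conj u hv) hu.
have e : (u ++ (v ++ winv v') ++ winv u) ++ (u ++ winv u') =
   (u ++ v ++ winv v') ++ winv u ++ winv (winv u) ++ winv u' by rewrite winvK -!catA.
rewrite e in h; move/Ntor_cancel: h.
by rewrite -!catA.
Qed.

Lemma eqv_winv u u' : eqv u u' -> eqv (winv u) (winv u').
Proof.
move=> h; rewrite /eqv winvK.
have h' := Ntor_conj (winv u) (eqv_sym h); rewrite /eqv in h'.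
have e : winv u ++ (u' ++ winv u) ++ winv (winv u) =
   (winv u ++ u') ++ winv u ++ winv (winv u) ++ [::] by rewrite cats0 -!catA.
rewrite e in h'; move/Ntor_cancel: h'.
by rewrite cats0.
Qed.

Definition canon (w : word m n) : word m n := epsilon (inhabits [::]) (eqv w).

Lemma canon_eqv w : eqv w (canon w).
Proof. by apply: (epsilon_spec (inhabits [::]) (eqv w)); exists w; apply: eqv_refl. Qed.

Lemma canon_eq u v : eqv u v -> canon u = canon v.
Proof.
move=> h; rewrite /canon; congr epsilon.
apply: functional_extensionality => x; apply: propositional_extensionality.
split=> h'; [apply: eqv_trans (eqv_sym h) h'|apply: eqv_trans h h'].
Qed.

Lemma canon_eqv_iff u v : canon u = canon v -> eqv u v.
Proof.
move=> e; apply: eqv_trans (canon_eqv u) _; rewrite e.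
exact: eqv_sym (canon_eqv v).
Qed.

Lemma canon_idem w : canon (canon w) = canon w.
Proof. exact: canon_eq (eqv_sym (canon_eqv w)). Qed.

Definition QT := {w : word m n | canon w == w}.

Definition mk (w : word m n) : QT := exist _ (canon w) (introT eqP (canon_idem w)).

Lemma QT_ext (x y : QT) : proj1_sig x = proj1_sig y -> x = y.
Proof.
case: x => x hx; case: y => y hy /= e; subst y.
by rewrite (bool_irrelevance hx hy).
Qed.

Lemma mk_val x : mk (proj1_sig x) = x.
Proof. by apply: QT_ext; case: x => x /= /eqP. Qed.

Lemma mk_eq u v : mk u = mk v <-> eqv u v.
Proof.
split => [e|h].
- by apply: canon_eqv_iff; exact: (congr1 (@proj1_sig _ _) e).
- by apply: QT_ext => /=; apply: canon_eq.
Qed.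

Definition qmul (x y : QT) : QT := mk (proj1_sig x ++ proj1_sig y).
Definition qinv (x : QT) : QT := mk (winv (proj1_sig x)).
Definition qone : QT := mk [::].

Lemma qmul_mk u v : qmul (mk u) (mk v) = mk (u ++ v).
Proof.
apply/mk_eq => /=; apply: eqv_cat; exact: eqv_sym (canon_eqv _).
Qed.

Lemma qinv_mk u : qinv (mk u) = mk (winv u).
Proof. by apply/mk_eq => /=; apply: eqv_winv; exact: eqv_sym (canon_eqv _). Qed.

Lemma qmulA x y z : qmul x (qmul y z) = qmul (qmul x y) z.
Proof. by rewrite -[x]mk_val -[y]mk_val -[z]mk_val !qmul_mk catA. Qed.

Lemma qmul1 x : qmul qone x = x.
Proof. by rewrite -[x]mk_val /qone qmul_mk. Qed.

Lemma mk_one w : mk w = qone <-> N w.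
Proof. by rewrite /qone mk_eq /eqv /= cats0. Qed.

Lemma qmulV x : qmul (qinv x) x = qone.
Proof.
rewrite -[x]mk_val qinv_mk qmul_mk; apply/mk_one.
have e : winv (proj1_sig x) ++ proj1_sig x =
  [::] ++ winv (proj1_sig x) ++ winv (winv (proj1_sig x)) ++ [::] by rewrite winvK cats0.
by rewrite e; apply/Ntor_cancel; apply: Ntor_nil.
Qed.

Definition GQ : group := @Defs.Group QT qmul qinv qone qmulA qmul1 qmulV.

Lemma gpow_mk w k : gpow (mk w : GQ) k = mk (wpow w k).
Proof.
elim: k => [|k IH] //=.
by rewrite IH /= qmul_mk.
Qed.

Lemma GQ_tf : torsion_free GQ.
Proof.
move=> x k hk; rewrite -[x]mk_val gpow_mk => /mk_one h.
by apply/mk_one; apply: Ntor_gen hk h.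
Qed.

End Quot.
Section ItoII.
Variables (K : nzRingType) (m n : nat) (hm : (0 < m)%N) (hn : (0 < n)%N).
Variables (P : {set {set cell m n}}) (pP : partition P [set: cell m n]).
Variables (r : 'I_m -> K) (s : 'I_n -> K).
Hypotheses (rnz : forall i, r i != 0) (snz : forall j, s j != 0).
Hypothesis realP : realizable P r s.
Hypothesis H1 : ~ exists i i' : 'I_m, (i < i')%N /\ Ntor P (gA n i ++ winv (gA n i')).
Hypothesis H2 : ~ exists j j' : 'I_n, (j < j')%N /\ Ntor P (gB m j ++ winv (gB m j')).

Let GG : group := GQ P.
Let A (i : 'I_m) : GG := mk P (gA n i).
Let B (j : 'I_n) : GG := mk P (gB m j).
Let za : 'I_m := Ordinal hm.
Let zb : 'I_n := Ordinal hn.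
Let zz : cell m n := (za, zb).

Let A_inj : injective A.
Proof.
move=> i i' /mk_eq h.
case: (ltngtP i i') => [lt|lt|e].
- by exfalso; apply: H1; exists i, i'.
- exfalso; apply: H1; exists i', i; split => //.
  by have := Ntor_inv h; rewrite winv_cat winvK.
- exact: val_inj.
Qed.

Let B_inj : injective B.
Proof.
move=> i i' /mk_eq h.
case: (ltngtP i i') => [lt|lt|e].
- by exfalso; apply: H2; exists i, i'.
- exfalso; apply: H2; exists i', i; split => //.
  by have := Ntor_inv h; rewrite winv_cat winvK.
- exact: val_inj.
Qed.

Let ael (x : GG) : K := \sum_i (if eqG x (A i) then r i else 0).
Let bel (x : GG) : K := \sum_j (if eqG x (B j) then s j else 0).

Let ael_A i : ael (A i) = r i.
Proof.
rewrite /ael (bigD1 i) //=; case: eqGP => // _.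
rewrite big1 ?addr0 // => j ji; case: eqGP => // /A_inj e.
by rewrite e eqxx in ji.
Qed.

Let bel_B j : bel (B j) = s j.
Proof.
rewrite /bel (bigD1 j) //=; case: eqGP => // _.
rewrite big1 ?addr0 // => k kj; case: eqGP => // /B_inj e.
by rewrite e eqxx in kj.
Qed.

Let ael_supp x : ael x != 0 -> exists i, x = A i.
Proof.
move=> hx; apply: NNPP => hno; move/eqP: hx; apply.
by rewrite /ael big1 // => i _; case: eqGP => // e; exfalso; apply: hno; exists i.
Qed.

Let bel_supp x : bel x != 0 -> exists j, x = B j.
Proof.
move=> hx; apply: NNPP => hno; move/eqP: hx; apply.
by rewrite /bel big1 // => i _; case: eqGP => // e; exfalso; apply: hno; exists i.
Qed.

Let ael_nz i : ael (A i) != 0.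
Proof. by rewrite ael_A. Qed.
Let bel_nz j : bel (B j) != 0.
Proof. by rewrite bel_B. Qed.

Let sl_a : support_list ael (List.map A (enum 'I_m)).
Proof.
split.
  apply: FinFun.Injective_map_NoDup; first by move=> x y; apply: A_inj.
  by apply: NoDup_uniq; apply: enum_uniq.
move=> x; split.
  by case/ael_supp=> i ->; apply: List.in_map; apply/In_mem; rewrite mem_enum.
by case/List.in_map_iff=> i [<- _]; apply: ael_nz.
Qed.

Let sl_b : support_list bel (List.map B (enum 'I_n)).
Proof.
split.
  apply: FinFun.Injective_map_NoDup; first by move=> x y; apply: B_inj.
  by apply: NoDup_uniq; apply: enum_uniq.
move=> x; split.
  by case/bel_supp=> i ->; apply: List.in_map; apply/In_mem; rewrite mem_enum.
by case/List.in_map_iff=> i [<- _]; apply: bel_nz.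
Qed.

Let Phi (q : cell m n) : GG := gmul (A q.1) (B q.2).

Let Phi_mk q : Phi q = mk P (gA n q.1 ++ gB m q.2).
Proof. exact: qmul_mk. Qed.

Let Phi_same p q : same_block P p q -> Phi p = Phi q.
Proof.
move=> sb; rewrite !Phi_mk; apply/mk_eq; rewrite /eqv winv_cat -!catA.
apply: Ntor_rel; right; right; exists p.1, p.2, q.1, q.2; split => //.
by case: p sb => ? ?; case: q => ? ?.
Qed.

Let Phi_zz : Phi zz = qone P.
Proof.
rewrite Phi_mk; apply/mk_one; apply: Ntor_mul; apply: Ntor_rel.
- by left; exists za.
- by right; left; exists zb.
Qed.

Let cell00 (p : cell m n) : (nat_of_ord p.1 == 0%N) && (nat_of_ord p.2 == 0%N) -> p = zz.
Proof.
case: p => [[i hi] [j hj]] /= /andP [/eqP ei /eqP ej]; subst.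
by congr pair; apply: val_inj.
Qed.

Let blockE x E : E \in P ->
  \sum_(q in E) (if eqG (Phi q) x then r q.1 * s q.2 else 0) =
  if (zz \in E) && eqG x (qone P) then 1 else 0.
Proof.
move=> hE.
have [e eE] : exists e, e \in E.
  apply/set0Pn; case/and3P: pP => _ _ n0; by apply: contraNneq n0 => <-.
have const : forall q, q \in E -> Phi q = Phi e.
  by move=> q qE; apply: Phi_same; exists E => //; rewrite qE eE.
have := realP hE; cbv zeta => -[c1 c0].
have ex00 : (exists2 p, p \in E & (nat_of_ord p.1 == 0%N) && (nat_of_ord p.2 == 0%N))
    <-> zz \in E.
  split; first by case=> p pE /cell00 <-.
  by move=> hz; exists zz.
case: (eqGP (Phi e) x) => hx.
- rewrite (eq_bigr (fun q => r q.1 * s q.2)); last first.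
    by move=> q qE; rewrite const // hx; case: eqGP.
  case: (boolP (zz \in E)) => hz /=.
  + have -> : eqG x (qone P) by apply/eqGP; rewrite -hx -(const zz hz) Phi_zz.
    by apply: c1; apply/ex00.
  + by apply: c0 => /ex00; rewrite (negbTE hz).
- rewrite big1; last by move=> q qE; rewrite const //; case: eqGP.
  case: (boolP (zz \in E)) => hz //=.
  case: eqGP => // hx1; exfalso; apply: hx.
  by rewrite -(const zz hz) Phi_zz hx1.
Qed.

Let block_sum x : \sum_(q | eqG (Phi q) x) r q.1 * s q.2 =
  if eqG x (qone P) then 1 else 0.
Proof.
rewrite big_mkcond /=.
have -> : \sum_q (if eqG (Phi q) x then r q.1 * s q.2 else 0) =
          \sum_(q in cover P) (if eqG (Phi q) x then r q.1 * s q.2 else 0).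
  by apply: eq_bigl => q; rewrite (part_cover pP).
rewrite (big_trivIset _ (part_triv pP)) /=.
under eq_bigr => E hE do rewrite (blockE x hE).
case: (eqGP x (qone P)) => hx.
- have e1 : eqG x (qone P) by apply/eqGP.
  have pbP : pblock P zz \in P by apply: pblock_mem; rewrite (part_cover pP).
  rewrite (bigD1 (pblock P zz)) //= mem_pblock (part_cover pP) /=.
  rewrite big1 ?addr0 // => E /andP [hE ne].
  case: (boolP (zz \in E)) => hz; rewrite /= ?andbT //.
  by rewrite (def_pblock (part_triv pP) hE hz) eqxx in ne.
- have e1 : eqG x (qone P) = false by apply/eqGP.
  by rewrite big1 // => E _; rewrite andbF.
Qed.

Let prod1 : gr_prod_is_one ael bel.
Proof.
move=> sl hsl x; cbv zeta.
rewrite (coef A_inj B_inj ael_nz ael_supp bel_supp hsl x).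
rewrite (eq_bigr (fun q => r q.1 * s q.2)); last by move=> q _; rewrite ael_A bel_B.
rewrite block_sum; split => [->|hx]; case: eqGP => //.
Qed.

Lemma ItoII_main : (forall G : group, torsion_free G ->
     ~ exists a b : G -> K, rank_eq a m /\ rank_eq b n /\ gr_prod_is_one a b) -> False.
Proof.
move=> Hi; apply: (Hi GG (@GQ_tf m n P)); exists ael, bel; split; last split.
- exists (List.map A (enum 'I_m)); split => //.
  by rewrite List_map_seq size_map size_enum_ord.
- exists (List.map B (enum 'I_n)); split => //.
  by rewrite List_map_seq size_map size_enum_ord.
- exact: prod1.
Qed.

End ItoII.
Theorem theorem6p5 (K : unitRingType)
    (K_div : forall x : K, x != 0%R -> x \is a GRing.unit)
    (m n : nat) (hm : (2 <= m)%N) (hn : (2 <= n)%N) :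
  (forall G : group, torsion_free G ->
     ~ exists a b : G -> K, rank_eq a m /\ rank_eq b n /\ gr_prod_is_one a b)
  <->
  (forall P : {set {set cell m n}}, in_ULIE K P ->
     (exists i i' : 'I_m, (i < i')%N /\ Ntor P (gA n i ++ winv (gA n i')))
     \/ (exists j j' : 'I_n, (j < j')%N /\ Ntor P (gB m j ++ winv (gB m j')))).
Proof.
have hm' : (0 < m)%N by apply: ltnW.
have hn' : (0 < n)%N by apply: ltnW.
split.
- move=> Hi P [pP [_ [r [s [rnz [snz [realP _]]]]]]].
  apply: NNPP => hno.
  apply: (@ItoII_main K m n hm' hn' P pP r s rnz snz realP _ _ Hi).
  + by move=> h; apply: hno; left.
  + by move=> h; apply: hno; right.
- move=> Hii G tf [a [b [[sa [sla sza]] [[sb [slb szb]] ab1]]]].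
  exact: (IItoI_false hm' hn' Hii tf sla slb sza szb ab1).
Qed.
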